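(* Let $p$ be an odd prime and $G$ the non-abelian group of order $p^3$ and exponent $p$. Let $S$ be a sequence over $G$ of length $3p-2$ none of whose terms lies in $Z(G)$, and suppose that for some non-central $z$-class $\mathcal{K}$ of $G$ exactly $p$ terms of $S$ (counted with multiplicity) lie in $\mathcal{K}$, and that these $p$ terms are pairwise conjugate in $G$. Then $S$ has a non-empty product-one subsequence.
   Context: $G = \langle x, y : x^p = y^p = 1,\ [y,x] \text{ central}\rangle$ is the Heisenberg group of order $p^3$ and exponent $p$, with $Z(G)=[G,G]$ of order $p$. For $g\in G\setminus Z(G)$, its $z$-class is $\mathcal{K}[g] = \{g^\lambda u : 1\le\lambda\le p-1,\ u\in Z(G)\} = C_G(g)\setminus Z(G)$. A sequence over $G$ is a finite unordered list (multiset) of elements of $G$; a subsequence is a sub-multiset; a non-empty sequence is product-one if some ordering of its terms has product $1$. *)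

(* Defs.v *)
From mathcomp Require Import all_boot all_fingroup all_solvable.
Set Implicit Arguments. Unset Strict Implicit. Unset Printing Implicit Defensive.
Local Open Scope group_scope.

Definition zclass (gT : finGroupType) (p : nat) (G : {set gT}) (g : gT) : {set gT} :=
  [set x | [exists l : 'I_p, (0 < (l : nat))%N && [exists u in 'Z(G), x == g ^+ l * u]]].

(* T is a subsequence (sub-multiset) of S *)
Definition submultiset (T : eqType) (s t : seq T) : Prop :=
  forall x, (count_mem x s <= count_mem x t)%N.

Definition product_one (gT : finGroupType) (s : seq gT) : Prop :=
  s <> [::] /\ exists s', perm_eq s s' /\ \prod_(x <- s') x = 1.

(* Main.v *)
Require Import Defs.
From mathcomp Require Import all_boot all_fingroup all_solvable all_algebra all_field.
From mathcomp Require Import mxabelem ring zify.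
Set Implicit Arguments. Unset Strict Implicit. Unset Printing Implicit Defensive.

Section Olson.
Import GRing.Theory.
Local Open Scope ring_scope.
Lemma alt_sum (R : comNzRingType) (N : nat) (X : {set 'I_N}) :
  X != setT -> \sum_(J : {set 'I_N}) (-1) ^+ #|J| * (X \subset J)%:R = 0 :> R.
Proof.
move=> XT; have [i iX] : exists i, i \notin X.
  apply/existsP; rewrite -negb_forall; apply: contra XT => /forallP H.
  by apply/eqP/setP=> j; rewrite inE H.
pose h (J : {set 'I_N}) := if i \in J then J :\ i else i |: J.
have hK : involutive h.
  move=> J; rewrite /h; case: (boolP (i \in J)) => iJ.
    by rewrite !inE eqxx /= setD1K.
  by rewrite !inE eqxx /= setU1K.
rewrite (bigID (fun J : {set 'I_N} => i \in J)) /=.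
rewrite (reindex h); last by exists h => J _; rewrite hK.
have -> : \sum_(J : {set 'I_N} | i \in h J) (-1) ^+ #|h J| * (X \subset h J)%:R =
          \sum_(J : {set 'I_N} | i \notin J) - ((-1) ^+ #|J| * (X \subset J)%:R) :> R.
  apply: eq_big => J.
    by rewrite /h; case: (i \in J); rewrite !inE eqxx.
  move=> ihJ; have iJ : i \notin J.
    by move: ihJ; rewrite /h; case: (boolP (i \in J)) => // _; rewrite !inE eqxx.
  rewrite /h (negPf iJ) cardsU1 iJ add1n exprS mulN1r mulNr.
  congr (- (_ * _)); congr (_%:R); symmetry.
  case: (boolP (X \subset J)) => h1; first by rewrite (subset_trans h1 (subsetUr _ _)).
  case: (boolP (X \subset i |: J)) => // sXJ; case/negP: h1.
  apply/subsetP=> x xX; have := subsetP sXJ x xX; rewrite !inE.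
  by case/orP=> // /eqP xi; rewrite -xi xX in iX.
by rewrite sumrN addNr.
Qed.

Lemma deg_lemma (R : comNzRingType) (N k : nat) (x : 'I_k -> 'I_N -> R) :
  (k < N)%N ->
  \sum_(J : {set 'I_N}) (-1) ^+ #|J| * \prod_(j < k) \sum_(i in J) x j i = 0.
Proof.
move=> kN.
have E : forall J : {set 'I_N}, \prod_(j < k) \sum_(i in J) x j i =
   \sum_(f : {ffun 'I_k -> 'I_N}) ([set f j | j : 'I_k] \subset J)%:R * \prod_(j < k) x j (f j).
  move=> J.
  rewrite (eq_bigr (fun j => \sum_(i : 'I_N) (i \in J)%:R * x j i)); last first.
    by move=> j _; rewrite big_mkcond; apply: eq_bigr => i _; case: (i \in J); rewrite ?mul1r ?mul0r.
  rewrite bigA_distr_bigA /=; apply: eq_bigr => f _.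
  case: (boolP ([set f j | j : 'I_k] \subset J)) => sub.
    rewrite mul1r; apply: eq_bigr => j _.
    by rewrite (subsetP sub) ?mul1r // imset_f.
  rewrite mul0r; have [j0 fj0] : exists j0, f j0 \notin J.
    apply/existsP; rewrite -negb_forall; apply: contra sub => /forallP H.
    by apply/subsetP=> y /imsetP [j _ ->]; apply: H.
  by rewrite (bigD1 j0) //= (negPf fj0) !mul0r.
under eq_bigr => J _ do rewrite E big_distrr.
rewrite exchange_big /= big1 // => f _.
under eq_bigr => J _ do rewrite mulrA.
rewrite -big_distrl /= alt_sum ?mul0r //.
apply/negP => /eqP XT.
have := leq_imset_card f (mem 'I_k); rewrite -/(imset _ _) XT cardsT !card_ord.
by rewrite leqNgt kN.
Qed.

Lemma fermat_Fp (p : nat) (t : 'F_p) : prime p -> t ^+ p.-1 = (t != 0)%:R.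
Proof.
move=> pp; have p1 : (0 < p.-1)%N by rewrite -ltnS prednK ?prime_gt1 ?prime_gt0.
have [->|nz] := eqVneq t 0; first by rewrite expr0n eqn0Ngt p1.
rewrite /=; apply: (mulIf nz); rewrite mul1r -exprSr prednK ?prime_gt0 //.
by have := expf_card t; rewrite card_Fp.
Qed.

Lemma helper (p : nat) (a b : 'F_p) : (a == 0) && (b == 0) = false ->
  (1 - (a != 0)%:R) * (1 - (b != 0)%:R) = 0 :> 'F_p.
Proof. by case: (a == 0); case: (b == 0) => //= _; rewrite ?subrr ?mulr0 ?mul0r. Qed.

Lemma olson2 (p N : nat) (u v : 'I_N -> 'F_p) : prime p -> (p.-1 + p.-1 < N)%N ->
  exists J : {set 'I_N}, J != set0 /\ \sum_(i in J) u i = 0 /\ \sum_(i in J) v i = 0.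
Proof.
move=> pp hN.
case: (pickP (fun J : {set 'I_N} => [&& J != set0, \sum_(i in J) u i == 0 & \sum_(i in J) v i == 0])).
  by move=> J /and3P [a /eqP b /eqP c]; exists J.
move=> H; exfalso.
pose A (J : {set 'I_N}) : 'F_p := (\sum_(i in J) u i) ^+ p.-1.
pose B (J : {set 'I_N}) : 'F_p := (\sum_(i in J) v i) ^+ p.-1.
have L1 : \sum_(J : {set 'I_N}) (-1) ^+ #|J| * ((1 - A J) * (1 - B J)) = 1.
  rewrite (bigD1 set0) //= big1 ?addr0.
    by rewrite cards0 expr0 mul1r /A /B !big_set0 expr0n /= eqn0Ngt -ltnS prednK ?prime_gt0 // prime_gt1 // subr0 mulr1.
  move=> J J0; have := H J; rewrite J0 /= /A /B !fermat_Fp //.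
  by move=> Hab; rewrite (helper Hab) mulr0.
have L0 : \sum_(J : {set 'I_N}) (-1) ^+ #|J| * ((1 - A J) * (1 - B J)) = 0.
  have E : forall J : {set 'I_N}, (-1) ^+ #|J| * ((1 - A J) * (1 - B J)) =
     (-1) ^+ #|J| * \prod_(j < 0) \sum_(i in J) u i
     - (-1) ^+ #|J| * \prod_(j < p.-1) \sum_(i in J) u i
     - (-1) ^+ #|J| * \prod_(j < p.-1) \sum_(i in J) v i
     + (-1) ^+ #|J| * \prod_(j < p.-1 + p.-1) \sum_(i in J) (if (j < p.-1)%N then u i else v i).
    move=> J; rewrite big_ord0 big_split_ord /=.
    have P1 : \prod_(i < p.-1) \sum_(i0 in J) (if (i < p.-1)%N then u i0 else v i0)
       = \prod_(i < p.-1) \sum_(i0 in J) u i0.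
      by apply: eq_bigr => j _; rewrite ltn_ord.
    have P2 : \prod_(i < p.-1) \sum_(i0 in J) (if (p.-1 + i < p.-1)%N then u i0 else v i0)
       = \prod_(i < p.-1) \sum_(i0 in J) v i0.
      by apply: eq_bigr => j _; rewrite ltnNge leq_addr.
    rewrite P1 P2.
    rewrite !prodr_const !card_ord /A /B; ring.
  under eq_bigr => J _ do rewrite E.
  rewrite !big_split /= !sumrN !deg_lemma //; first by rewrite !subrr add0r.
  - exact: leq_ltn_trans (leq_addr _ _) hN.
  - exact: leq_ltn_trans (leq_addr _ _) hN.
  - by apply: leq_ltn_trans hN.
by have := oner_neq0 'F_p; rewrite -L1 L0 eqxx.
Qed.

Lemma olson_rV (p d M : nat) (f : 'I_M -> 'rV['F_p]_d.+1) (t : 'rV['F_p]_d.+1) :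
  prime p -> (d <= 1)%N -> (p.-1 + p.-1 <= M)%N -> t != 0 ->
  exists J : {set 'I_M}, J != set0 /\ (\sum_(i in J) f i = 0 \/ \sum_(i in J) f i = t).
Proof.
move=> pp d1 hM tnz.
pose g (i : 'I_(M + 1)) : 'rV['F_p]_d.+1 :=
  match split i with inl j => f j | inr _ => - t end.
have hN : (p.-1 + p.-1 < M + 1)%N by rewrite addn1 ltnS.
have [J [J0 [Hu Hv]]] := @olson2 p (M + 1) (fun i => g i 0 ord0) (fun i => g i 0 (inord 1)) pp hN.
have SZ : \sum_(i in J) g i = 0.
  apply/rowP => c; rewrite summxE !mxE.
  have : (c <= 1)%N by rewrite -ltnS (leq_trans (ltn_ord c)).
  rewrite leq_eqVlt ltnS leqn0 => /orP [/eqP c1 | /eqP c0].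
    by rewrite -[RHS]Hv; apply: eq_bigr => i _; congr (g i 0 _); apply: val_inj => /=; rewrite inordK; [exact: c1 | by rewrite -{1}c1 ltn_ord].
  by rewrite -[RHS]Hu; apply: eq_bigr => i _; congr (g i 0 _); apply: val_inj.
pose J' := [set j : 'I_M | lshift 1 j \in J].
have Esum : \sum_(i in J) g i = \sum_(j in J') f j + (if rshift M (@ord0 0) \in J then - t else 0).
  rewrite big_mkcond big_split_ord /= big_ord1.
  congr (_ + _); last by rewrite /g; case: (rshift M ord0 \in J) => //; rewrite (unsplitK (inr _)).
  rewrite [RHS]big_mkcond; apply: eq_bigr => j _; rewrite inE /g.
  by case: (lshift 1 j \in J) => //; rewrite (unsplitK (inl _)).
exists J'; case: (boolP (rshift M (@ord0 0) \in J)) => iJ; [rewrite iJ in Esum | rewrite (negPf iJ) in Esum].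
  split; last by right; move: SZ; rewrite Esum => /eqP; rewrite addr_eq0 opprK => /eqP.
  apply: contra tnz => /eqP J'0; move: SZ; rewrite Esum J'0 big_set0 add0r => /eqP.
  by rewrite oppr_eq0.
split; last by left; rewrite -[RHS]SZ Esum addr0.
apply: contra J0 => /eqP J'0; apply/eqP/setP => i; rewrite inE.
rewrite -(splitK i); case: (split i) => [j|k] /=.
  apply: negbTE; apply/negP => jJ.
  have : j \in J' by rewrite inE.
  by rewrite J'0 inE.
have -> : k = ord0 by apply: val_inj; case: k => [[]].
exact: negbTE.
Qed.

End Olson.

Local Open Scope group_scope.
Section Grp.
Variables (gT : finGroupType) (G : {group gT}) (p : nat).
Hypotheses (pp : prime p) (oG : #|G| = (p ^ 3)%N) (ncG : ~~ abelian G) (expG : exponent G = p).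

Lemma pG : p.-group G.
Proof. by rewrite /pgroup oG pnatX pnat_id. Qed.

Lemma esG : extraspecial G.
Proof. by apply: p3group_extraspecial pG ncG _; rewrite oG pfactorK. Qed.

Lemma oZ : #|'Z(G)| = p.
Proof. exact: card_center_extraspecial pG esG. Qed.

Lemma commZ x y : x \in G -> y \in G -> [~ x, y] \in 'Z(G).
Proof.
move=> xG yG; case: esG => [[_ <-] _].
by rewrite derg1 mem_commg.
Qed.

Lemma zcomm z y : z \in 'Z(G) -> y \in G -> commute z y.
Proof. by case/setIP=> _ /centP cz yG; apply: cz. Qed.

Lemma ZG z : z \in 'Z(G) -> z \in G.
Proof. by case/setIP. Qed.

Lemma expp x : x \in G -> x ^+ p = 1.
Proof. by move=> xG; rewrite -expG expg_exponent. Qed.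

Lemma orderp x : x \in G -> x != 1 -> #[x] = p.
Proof.
move=> xG nx; have nt : #[x] != 1%N by rewrite order_eq1.
by apply/(prime_nt_dvdP pp nt); rewrite -expG dvdn_exponent.
Qed.

Lemma cent_zclass g : g \in G -> g \notin 'Z(G) -> 'C_G[g] \subset <[g]> * 'Z(G).
Proof.
move=> gG gZ.
have g1 : g != 1 by apply: contraNneq gZ => ->; apply: group1.
have og : #|<[g]>| = p by rewrite -orderE orderp.
have TI : <[g]> :&: 'Z(G) = 1 by apply: prime_TIg; rewrite ?og // cycle_subG.
have cardM : #|<[g]> * 'Z(G)| = (p * p)%N.
  by have := mul_cardG <[g]> 'Z(G); rewrite TI cards1 muln1 og oZ.
have sub : <[g]> * 'Z(G) \subset 'C_G[g].
  apply: mul_subG; first by rewrite cycle_subG inE gG cent1id.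
  apply/subsetP=> z zZ; rewrite inE ZG //; apply/cent1P; exact: zcomm.
have cardC : #|'C_G[g]| <= p * p.
  have : #|'C_G[g]| %| p ^ 3 by rewrite -oG cardSg // subsetIl.
  case/(dvdn_pfactor _ _ pp) => e e3 hC; rewrite hC.
  case: (ltnP e 3) => [elt|ege].
    rewrite (_ : (p * p)%N = (p ^ 2)%N); last by rewrite expnS expn1.
    by rewrite leq_exp2l ?prime_gt1.
  have e3' : e = 3 by apply/eqP; rewrite eqn_leq e3 ege.
  have : 'C_G[g] == G by rewrite eqEcard subsetIl oG hC e3' leqnn.
  move/eqP => CG; case/negP: gZ; rewrite inE gG /= -sub_cent1.
  by rewrite -{1}CG subsetIr.
have : <[g]> * 'Z(G) == 'C_G[g] by rewrite eqEcard sub cardM.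
by move/eqP ->.
Qed.

Lemma zclass_cent g b : g \in G -> g \notin 'Z(G) -> b \in 'C_G[g] -> b \notin 'Z(G) ->
  b \in zclass p G g.
Proof.
move=> gG gZ bC bZ.
have g1 : g != 1 by apply: contraNneq gZ => ->; apply: group1.
have := subsetP (cent_zclass gG gZ) b bC.
case/mulsgP => x u /cycleP [m xe] uZ be.
rewrite inE; apply/existsP.
have mp : m %% p < p by rewrite ltn_mod prime_gt0.
exists (Ordinal mp); apply/andP; split.
  rewrite lt0n /=; apply: contra bZ => /eqP m0.
  by rewrite be xe -expg_mod_order orderp // m0 mul1g.
apply/existsP; exists u; rewrite uZ /= be xe.
by rewrite -[in g ^+ m](expg_mod_order g m) orderp.
Qed.

Lemma commK_ne1 g a b : g \in G -> g \notin 'Z(G) -> a \in zclass p G g ->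
  b \in G -> b \notin 'Z(G) -> b \notin zclass p G g -> [~ b, a] != 1.
Proof.
move=> gG gZ aK bG bZ bK; apply: contra bK => /eqP c1.
have g1 : g != 1 by apply: contraNneq gZ => ->; apply: group1.
move: aK; rewrite inE => /existsP [l /andP [l0 /existsP [u /andP [uZ /eqP ae]]]].
rewrite {a}ae in c1.
have c2 : [~ b, g ^+ l] = 1.
  move: c1; rewrite commgMJ.
  have -> : [~ b, u] = 1 by apply/eqP/commgP; apply/esym/zcomm.
  move=> c1; have : [~ b, g ^+ l] ^ u = 1 by rewrite -c1 mul1g.
  by move/eqP; rewrite conjg_eq1; move/eqP.
have glG : g ^+ l \in G by rewrite groupX.
have gl1 : g ^+ l != 1.
  apply/negP; rewrite -order_dvdn orderp // => /(dvdn_leq l0).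
  by rewrite leqNgt ltn_ord.
have cyc : <[g ^+ l]> = <[g]>.
  apply/eqP; rewrite eqEcard cycle_subG mem_cycle /= -!orderE !orderp //.
have gCb : g \in 'C[b].
  have : <[g]> \subset 'C[b] by rewrite -cyc cycle_subG; apply/cent1P/esym/commgP/eqP.
  by rewrite cycle_subG.
apply: zclass_cent => //; rewrite inE bG /=; apply/cent1P/esym/cent1P; exact: gCb.
Qed.

Lemma comm_prod (b w : gT) (s : seq gT) : w \in 'Z(G) ->
  (forall x, x \in s -> x \in G /\ [~ b, x] = w) ->
  [~ b, \prod_(x <- s) x] = w ^+ size s.
Proof.
move=> wZ; elim: s => [|x s IH] H; first by rewrite big_nil commg1.
have [xG bx] := H x (mem_head _ _).
have PG : \prod_(y <- s) y \in G.
  by rewrite big_seq; apply: group_prod => y ys; case: (H y) => //; rewrite inE ys orbT.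
rewrite big_cons commgMJ IH; last by move=> y ys; apply: H; rewrite inE ys orbT.
rewrite bx (_ : w ^ _ = w) ?expgSr //; apply/conjg_fixP/commgP; exact: zcomm.
Qed.

Lemma move_prod (s1 s2 r : seq gT) (b w : gT) :
  {subset s2 ++ r <= G} -> b \in G -> w \in 'Z(G) ->
  (forall x, x \in s2 -> [~ b, x] = w) ->
  \prod_(x <- s1 ++ b :: s2 ++ r) x = \prod_(x <- s1 ++ s2 ++ b :: r) x * w ^+ size s2.
Proof.
move=> sG bG wZ H.
have cp := @comm_prod b w s2 wZ.
rewrite !big_cat /= !big_cons big_cat /= -!mulgA; congr (_ * _).
have cs : forall x, x \in s2 -> x \in G /\ [~ b, x] = w.
  by move=> x xs; split; [apply: sG; rewrite mem_cat xs | exact: H].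
rewrite [b * (_ * _)]mulgA [b * _]commgC (cp cs) -!mulgA; congr (_ * (_ * _)).
apply: zcomm; first by rewrite groupX.
by rewrite big_seq; apply: group_prod => x xr; apply: sG; rewrite mem_cat xr orbT.
Qed.

Lemma nZ : G \subset 'N('Z(G)).
Proof. exact: normal_norm (center_normal G). Qed.

Lemma coset_prod_const (s : seq gT) c :
  (forall x, x \in s -> x \in G /\ coset 'Z(G) x = c) ->
  coset 'Z(G) (\prod_(x <- s) x) = c ^+ size s.
Proof.
elim: s => [|x s IH] H; first by rewrite big_nil morph1.
have [xG cx] := H x (mem_head _ _).
have H' : forall y, y \in s -> y \in G /\ coset 'Z(G) y = c.
  by move=> y ys; apply: H; rewrite inE ys orbT.
have PG : \prod_(y <- s) y \in G.
  by rewrite big_seq; apply: group_prod => y ys; case: (H' y).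
by rewrite big_cons morphM ?(subsetP nZ) //= (IH H') cx expgS.
Qed.

End Grp.

Theorem theorem2p8 (gT : finGroupType) (G : {group gT}) (p : nat)
  (S : seq gT) :
  prime p -> odd p ->
  #|G| = (p ^ 3)%N -> ~~ abelian G -> exponent G = p ->
  {subset S <= G} ->
  size S = (3 * p - 2)%N ->
  (forall x, x \in S -> x \notin 'Z(G)) ->
  (exists2 g, g \in G :\: 'Z(G) &
     count (mem (zclass p G g)) S = p /\
     (forall x y, x \in S -> y \in S ->
        x \in zclass p G g -> y \in zclass p G g -> y \in x ^: G)) ->
  exists T : seq gT, submultiset T S /\ product_one T.
Proof.
move=> pp oddp oG ncG expG SG sizeS Snc [g /setDP [gG gZ] [cntK conjK]].
have p1 : (1 < p)%N := prime_gt1 pp.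
pose K := zclass p G g.
pose SK := [seq x <- S | x \in K].
pose SR := [seq x <- S | predC (mem K) x].
have sSK : size SK = p by rewrite size_filter.
have sSR : (p.-1 + p.-1 <= size SR)%N.
  have := count_predC (mem K) S; rewrite size_filter cntK sizeS => e.
  have -> : count (predC (mem K)) S = (3 * p - 2 - p)%N by lia.
  lia.
have aSK : nth 1 SK 0 \in SK by apply: mem_nth; rewrite sSK prime_gt0.
set a := nth 1 SK 0 in aSK.
have [aK aS] : a \in K /\ a \in S by move: aSK; rewrite mem_filter => /andP.
have aG := SG a aS; have aZ := Snc a aS.
have hK : forall x, x \in SK -> [/\ x \in G, coset 'Z(G) x = coset 'Z(G) a &
                                    forall b, b \in G -> [~ b, x] = [~ b, a]].
  move=> x; rewrite mem_filter => /andP [xK xS].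
  have := conjK a x aS xS aK xK; case/imsetP => y yG ->.
  have zZ : [~ a, y] \in 'Z(G) by apply: (commZ pp oG ncG).
  have zG : [~ a, y] \in G by apply: ZG zZ.
  split; first by rewrite groupJ.
    by rewrite conjg_mulR morphM ?(subsetP (nZ G)) //= (coset_id zZ) mulg1.
  move=> b bG; rewrite conjg_mulR commgMJ.
  have -> : [~ b, [~ a, y]] = 1 by apply/eqP/commgP/esym; exact: zcomm zZ bG.
  rewrite mul1g; apply/conjg_fixP/commgP/esym; apply: zcomm zZ _.
  by rewrite groupR.
have esg := esG pp oG ncG.
have oZ' := oZ pp oG ncG.
pose E := (G / 'Z(G))%G.
have abelE : p.-abelem E.
  apply/(abelemP pp); split.
    by apply: sub_der1_abelian; case: esg => [[_ ->] _].
  by move=> x /morphimP [y yN yG ->]; rewrite -morphX // (expp expG yG) morph1.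
have cardE : #|E| = (p ^ 2)%N.
  rewrite card_quotient ?nZ // -divgS ?center_sub // oG oZ' (expnS p 2) mulKn //.
  exact: prime_gt0.
have ntE : E :!=: 1.
  by rewrite -cardG_gt1 cardE expnS expn1; nia.
have dimE : (abelem_dim' (gval E) <= 1)%N.
  by have := dim_abelemE abelE ntE; rewrite cardE pfactorK // => [[->]].
pose rv := abelem_rV abelE ntE.
have rvprod : forall s : seq gT, {subset s <= G} ->
    rv (coset 'Z(G) (\prod_(x <- s) x)) = (\sum_(x <- s) rv (coset 'Z(G) x))%R.
  elim=> [|x s IH] sG; first by rewrite big_nil big_nil (morph1 (coset_morphism _)); apply: abelem_rV_1.
  have xG : x \in G by apply: sG; rewrite mem_head.
  have sG' : {subset s <= G} by move=> y ys; apply: sG; rewrite inE ys orbT.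
  have PG : \prod_(y <- s) y \in G by rewrite big_seq; apply: group_prod => y ys; apply: sG'.
  rewrite big_cons big_cons morphM ?(subsetP (nZ G)) //= /rv abelem_rV_M ?mem_quotient //.
  by rewrite -/rv (IH sG').
have cEa : coset 'Z(G) a \in E := mem_quotient _ aG.
have tnz : rv (coset 'Z(G) a) != 0%R.
  apply: contra aZ => /eqP h; apply: coset_idr; first exact: (subsetP (nZ G) a aG).
  apply: (@abelem_rV_inj _ _ _ abelE ntE _ _ cEa (group1 E)).
  by rewrite abelem_rV_1; exact: h.
pose f (i : 'I_(size SR)) := rv (coset 'Z(G) (nth 1 SR i)).
have [J [J0 HJ]] := @olson_rV p _ _ f (rv (coset 'Z(G) a)) pp dimE sSR tnz.
pose m := [seq i \in J | i <- enum 'I_(size SR)].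
pose B := mask m SR.
have BSR : subseq B SR := mask_subseq m SR.
have nthm : forall i : 'I_(size SR), nth false m i = (i \in J).
  by move=> i; rewrite (nth_map i) ?size_enum_ord // nth_ord_enum.
have sumB : (\sum_(x <- B) rv (coset 'Z(G) x))%R = (\sum_(i in J) f i)%R.
  rewrite big_mask; apply: eq_big => i; first by rewrite andbT nthm.
  by move=> _; rewrite /f (tnth_nth 1).
have sizeB : size B = #|J|.
  rewrite -sum1_size big_mask -sum1_card; apply: eq_bigl => i.
  by rewrite andbT nthm.
have BG : {subset B <= G}.
  by move=> x /(mem_subseq BSR); rewrite mem_filter => /andP [_ /SG].
have PBG : \prod_(x <- B) x \in G by rewrite big_seq; apply: group_prod => x /BG.
have cB : coset 'Z(G) (\prod_(x <- B) x) = 1 \/ coset 'Z(G) (\prod_(x <- B) x) = coset 'Z(G) a.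
  have PB := mem_quotient 'Z(G) PBG.
  case: HJ => HJ; [left|right].
    apply: (@abelem_rV_inj _ _ _ abelE ntE _ _ PB (group1 E)).
    by rewrite abelem_rV_1 -/rv rvprod // sumB HJ.
  apply: (@abelem_rV_inj _ _ _ abelE ntE _ _ PB cEa).
  by rewrite -/rv rvprod // sumB HJ.
case eB : B => [|b1 R].
  by move: sizeB; rewrite eB /= => /esym/eqP; rewrite cards_eq0 (negbTE J0).
have b1S : b1 \in SR by apply: (mem_subseq BSR); rewrite eB mem_head.
have [b1K b1S'] : b1 \notin K /\ b1 \in S by move: b1S; rewrite mem_filter => /andP.
have b1G := SG b1 b1S'; have b1Z := Snc b1 b1S'.
pose w := [~ b1, a].
have w1 : w != 1 := commK_ne1 pp oG ncG expG gG gZ aK b1G b1Z b1K.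
have wZ : w \in 'Z(G) := commZ pp oG ncG b1G aG.
have wG := ZG wZ.
have Zw : 'Z(G) \subset <[w]>.
  have : <[w]> == 'Z(G) :> {set _}.
    by rewrite eqEcard cycle_subG wZ oZ' -orderE (orderp pp expG wG w1) leqnn.
  by move/eqP ->.
pose k := if coset 'Z(G) (\prod_(x <- B) x) == 1 then p else p.-1.
have kp : (k <= p)%N by rewrite /k; case: ifP => _; rewrite ?leq_pred.
have kp1 : (p.-1 <= k)%N by rewrite /k; case: ifP => _; rewrite ?leq_pred.
pose As := take k SK.
have sAs : size As = k by rewrite size_takel // sSK.
have AsSK : forall x, x \in As -> x \in SK by move=> x; apply: mem_take.
have AsG : {subset As <= G} by move=> x /AsSK /hK [].
have PAsG : \prod_(x <- As) x \in G by rewrite big_seq; apply: group_prod => x /AsG.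
have cAs : coset 'Z(G) (\prod_(x <- As) x) = coset 'Z(G) a ^+ k.
  rewrite -sAs; apply: coset_prod_const => x /AsSK /hK [xG cx _]; by [].
pose T0 := As ++ b1 :: R.
have T0G : {subset T0 <= G}.
  move=> x; rewrite mem_cat => /orP [/AsG //|]; rewrite -eB; exact: BG.
have PT0G : \prod_(x <- T0) x \in G by rewrite big_seq; apply: group_prod => x /T0G.
have PBG' : \prod_(x <- b1 :: R) x \in G by rewrite -eB.
have cT0 : coset 'Z(G) (\prod_(x <- T0) x) = 1.
  rewrite big_cat /= morphM ?(subsetP (nZ G)) //= cAs.
  have -> : \prod_(x <- b1 :: R) x = \prod_(x <- B) x by rewrite eB.
  rewrite /k; case: eqP => [->|ne].
    by rewrite mulg1 -morphX ?(subsetP (nZ G)) //= (expp expG aG) morph1.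
  case: cB => // ->; rewrite -expgSr prednK ?prime_gt0 //.
  by rewrite -morphX ?(subsetP (nZ G)) //= (expp expG aG) morph1.
have T0Z : \prod_(x <- T0) x \in 'Z(G).
  by apply: coset_idr => //; apply: (subsetP (nZ G)).
have [j jlt ej] := cyclePmin (subsetP Zw _ (groupVr T0Z)).
rewrite (orderp pp expG wG w1) in jlt.
have jk : (j <= k)%N by apply: leq_trans kp1; rewrite -ltnS prednK ?prime_gt0.
exists T0; split.
  move=> x.
  have sub : subseq T0 (SK ++ SR) by rewrite cat_subseq ?take_subseq // -eB.
  apply: (leq_trans (leq_count_subseq _ sub)).
  have pS : perm_eq (SK ++ SR) S by apply/permPl; exact: perm_filterC.
  by rewrite (seq.permP pS).
split; first by move/(congr1 size); rewrite /T0 size_cat /= addnS.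
exists (take (k - j) As ++ b1 :: drop (k - j) As ++ R); split.
  rewrite /T0 -{1}(cat_take_drop (k - j) As) -catA perm_cat2l.
  by apply/permPl; exact: (perm_catCA (drop (k - j) As) [:: b1] R).
have sG : {subset drop (k - j) As ++ R <= G}.
  move=> x; rewrite mem_cat => /orP [/mem_drop /AsG //|xR].
  by apply: BG; rewrite eB inE xR orbT.
have Hw : forall x, x \in drop (k - j) As -> [~ b1, x] = w.
  by move=> x /mem_drop /AsSK /hK [_ _ ->].
have MP := move_prod (take (k - j) As) sG b1G wZ Hw.
apply: (etrans MP); rewrite catA cat_take_drop.
by rewrite size_drop sAs subKn // -ej mulgV.

Qed.
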